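(* Let $A,\Delta A\in\mathbb{R}^{n\times m}$, $\widetilde A=A+\Delta A$, $1\le r<\min\{n,m\}$, and assume $\widetilde\sigma_r>0$ so that $\widetilde\Sigma_1$ is invertible. Let $U_1^T\widetilde U_1=Q_1SQ_2^T$ be an SVD ($Q_1,Q_2\in\mathbb{O}_r$, $S$ diagonal nonnegative) and $Q=Q_1Q_2^T$. Then \[\widetilde U_1-U_1Q=U_2U_2^T(\Delta A)V_1V_1^T\widetilde V_1\widetilde\Sigma_1^{-1}+U_2U_2^T(\Delta A)V_2V_2^T\widetilde V_1\widetilde\Sigma_1^{-1}+U_2\Sigma_2V_2^T\widetilde V_1\widetilde\Sigma_1^{-1}+U_1Q_1(S-I)Q_2^T,\] and $\|S-I\|\le\|\sin\Theta(U_1,\widetilde U_1)\|^2$.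
   Context: $A=U\Sigma V^T$, $\widetilde A=\widetilde U\widetilde\Sigma\widetilde V^T$ are full SVDs ($U,\widetilde U\in\mathbb{R}^{n\times n}$, $V,\widetilde V\in\mathbb{R}^{m\times m}$ orthogonal, singular values $\sigma_1\ge\dots$ and $\widetilde\sigma_1\ge\dots$ nonincreasing). $U=(U_1\ U_2)$, $U_1\in\mathbb{R}^{n\times r}$; $V=(V_1\ V_2)$, $V_1\in\mathbb{R}^{m\times r}$; $\widetilde U_1,\widetilde V_1$ analogously for $\widetilde A$; $\widetilde\Sigma_1=\mathrm{diag}(\widetilde\sigma_1,\dots,\widetilde\sigma_r)$; $\Sigma_2\in\mathbb{R}^{(n-r)\times(m-r)}$ is rectangular diagonal with diagonal $\sigma_{r+1},\sigma_{r+2},\dots$. $\mathbb{O}_r$ is the set of $r\times r$ orthogonal matrices. $\|\cdot\|$ is the spectral norm. For $X,\widetilde X\in\mathbb{R}^{d\times r}$ with orthonormal columns, if $\zeta_1\ge\dots\ge\zeta_r$ are the singular values of $X^T\widetilde X$, then $\sin\Theta(X,\widetilde X)=\mathrm{diag}(\sqrt{1-\zeta_1^2},\dots,\sqrt{1-\zeta_r^2})$. *)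

(* Defs.v *)
From HB Require Import structures.
From mathcomp Require Import all_boot all_order all_algebra.
From mathcomp Require Import classical_sets reals.
Set Implicit Arguments. Unset Strict Implicit. Unset Printing Implicit Defensive.
Import Order.TTheory GRing.Theory Num.Theory.
Local Open Scope ring_scope.
Local Open Scope classical_set_scope.

Section Defs.
Variable R : realType.

Definition orthogonal_mx (k : nat) (Q : 'M[R]_k) : Prop := Q^T *m Q = 1%:M.

Definition rdiag (a b : nat) (D : 'M[R]_(a, b)) : Prop :=
  forall (i : 'I_a) (j : 'I_b), (i : nat) <> j -> D i j = 0.

Definition diag_nonneg_noninc (a b : nat) (D : 'M[R]_(a, b)) : Prop :=
  forall (i1 i2 : 'I_a) (j1 j2 : 'I_b),
    (i1 : nat) = j1 -> (i2 : nat) = j2 -> (i1 <= i2)%N ->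
    0 <= D i2 j2 /\ D i2 j2 <= D i1 j1.

Definition svd_of (a b : nat) (M : 'M[R]_(a, b)) (P : 'M[R]_a) (D : 'M[R]_(a, b))
    (W : 'M[R]_b) : Prop :=
  [/\ orthogonal_mx P, orthogonal_mx W, rdiag D, diag_nonneg_noninc D
    & M = P *m D *m W^T].

Definition singvals_of (k : nat) (M : 'M[R]_k) (z : 'rV[R]_k) : Prop :=
  exists P W, svd_of M P (diag_mx z) W.

(* the singular values, zeta_1 >= ... >= zeta_k (chosen; they are unique) *)
Definition singvals (k : nat) (M : 'M[R]_k) : 'rV[R]_k :=
  xget 0 (fun z => singvals_of M z).

Definition sinTheta (d k : nat) (X Xt : 'M[R]_(d, k)) : 'M[R]_k :=
  let z := singvals (X^T *m Xt) in diag_mx (\row_i Num.sqrt (1 - z 0 i ^+ 2)).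

Definition vnorm (b : nat) (x : 'cV[R]_b) : R := Num.sqrt (\sum_j x j 0 ^+ 2).

Definition spnorm (a b : nat) (M : 'M[R]_(a, b)) : R :=
  sup [set y | exists x : 'cV[R]_b, vnorm x = 1 /\ y = vnorm (M *m x)].

End Defs.

(* Main.v *)
Require Import Defs.
From HB Require Import structures.
From mathcomp Require Import all_boot all_order all_algebra.
From mathcomp Require Import classical_sets reals.
From mathcomp Require Import boolp lra.
Import Order.TTheory GRing.Theory Num.Theory.
Local Open Scope ring_scope.

Module Aux.
Set Implicit Arguments. Unset Strict Implicit.


Section Aux.
Variable R : realType.

Lemma orth_blocks (a b : nat) (U : 'M[R]_(a + b)) : orthogonal_mx U ->
  [/\ (lsubmx U)^T *m lsubmx U = 1%:M, (rsubmx U)^T *m lsubmx U = 0,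
      (rsubmx U)^T *m rsubmx U = 1%:M
    & lsubmx U *m (lsubmx U)^T + rsubmx U *m (rsubmx U)^T = 1%:M].
Proof.
rewrite /orthogonal_mx => hU; have hU' := mulmx1C hU.
rewrite -[U]hsubmxK tr_row_mx mul_col_row (scalar_mx_block a b) in hU.
rewrite -[U]hsubmxK tr_row_mx mul_row_col in hU'.
by case: (eq_block_mx hU) => -> _ -> ->.
Qed.

Definition sqn (b : nat) (x : 'cV[R]_b) := (x^T *m x) 0 0.

Lemma sqnE b (x : 'cV[R]_b) : sqn x = \sum_j x j 0 ^+ 2.
Proof. by rewrite /sqn mxE; apply: eq_bigr => j _; rewrite !mxE expr2. Qed.

Lemma sqn_ge0 b (x : 'cV[R]_b) : 0 <= sqn x.
Proof. by rewrite sqnE; apply: sumr_ge0 => j _; apply: sqr_ge0. Qed.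

Lemma vnorm_sqn b (x : 'cV[R]_b) : vnorm x = Num.sqrt (sqn x).
Proof. by rewrite sqnE. Qed.

Lemma vnorm_ge0 b (x : 'cV[R]_b) : 0 <= vnorm x.
Proof. exact: sqrtr_ge0. Qed.

Lemma sqn_iso a b (X : 'M[R]_(a, b)) x : X^T *m X = 1%:M -> sqn (X *m x) = sqn x.
Proof. by move=> h; rewrite /sqn trmx_mul mulmxA -(mulmxA x^T) h mulmx1. Qed.

Lemma vnorm_iso a b (X : 'M[R]_(a, b)) x : X^T *m X = 1%:M -> vnorm (X *m x) = vnorm x.
Proof. by move=> h; rewrite !vnorm_sqn sqn_iso. Qed.

Lemma orthT k (W : 'M[R]_k) : orthogonal_mx W -> orthogonal_mx W^T.
Proof. by rewrite /orthogonal_mx trmxK => /mulmx1C. Qed.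

Lemma sqnZ b (x : 'cV[R]_b) s : sqn (s *: x) = s ^+ 2 * sqn x.
Proof. by rewrite !sqnE mulr_sumr; apply: eq_bigr => j _; rewrite mxE exprMn. Qed.

Definition ev k (i : 'I_k) : 'cV[R]_k := delta_mx i 0.
Arguments ev {k} i.

Lemma sqn_ev k (i : 'I_k) : sqn (ev i) = 1.
Proof. by rewrite /sqn /ev trmx_delta mul_delta_mx mxE !eqxx. Qed.

Lemma vnorm_ev k (i : 'I_k) : vnorm (ev i) = 1.
Proof. by rewrite vnorm_sqn sqn_ev sqrtr1. Qed.

Lemma rdiag_diag k (S : 'M[R]_k) : rdiag S -> S = diag_mx (\row_i S i i).
Proof.
move=> h; apply/matrixP => i j; rewrite !mxE.
case: eqVneq => [-> //|ne]; rewrite mulr0n h //.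
by move=> e; move: ne; rewrite (val_inj e) eqxx.
Qed.

Lemma diag_ev k (d : 'rV[R]_k) i : diag_mx d *m ev i = d 0 i *: ev i.
Proof.
apply/matrixP => a b; rewrite mul_diag_mx !mxE.
by case: eqVneq => [->|]; rewrite ?mulr1 ?mulr0.
Qed.

Lemma sqn_diag_le k (d : 'rV[R]_k) c x : (forall i, d 0 i ^+ 2 <= c) ->
  sqn (diag_mx d *m x) <= c * sqn x.
Proof.
move=> h; rewrite !sqnE mulr_sumr; apply: ler_sum => i _.
rewrite mul_diag_mx mxE exprMn; apply: ler_wpM2r => //; exact: sqr_ge0.
Qed.

Lemma sqn_diag_ge k (d : 'rV[R]_k) c x : (forall i, c <= d 0 i ^+ 2) ->
  c * sqn x <= sqn (diag_mx d *m x).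
Proof.
move=> h; rewrite !sqnE mulr_sumr; apply: ler_sum => i _.
rewrite mul_diag_mx mxE exprMn; apply: ler_wpM2r => //; exact: sqr_ge0.
Qed.

Lemma spnorm_ub a b (M : 'M[R]_(a, b)) (i0 : 'I_b) c :
  (forall x, vnorm x = 1 -> vnorm (M *m x) <= c) -> spnorm M <= c.
Proof.
move=> h; apply: ge_sup; first by exists (vnorm (M *m ev i0)), (ev i0); rewrite vnorm_ev.
by move=> y [x [hx ->]]; apply: h.
Qed.

Lemma spnorm_lb a b (M : 'M[R]_(a, b)) c x :
  (forall x, vnorm x = 1 -> vnorm (M *m x) <= c) -> vnorm x = 1 ->
  vnorm (M *m x) <= spnorm M.
Proof.
move=> h hx; apply: sup_upper_bound; last by exists x.
split; first by exists (vnorm (M *m x)), x.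
by exists c => y [x' [hx' ->]]; apply: h.
Qed.

End Aux.
Arguments ev {R k} i.
Arguments vnorm_ev {R k} i.
Arguments sqn_ev {R k} i.


Section P2.
Variable R : realType.

Lemma sqn_split a r p (U1 : 'M[R]_(a, r)) (U2 : 'M[R]_(a, p)) y :
  U1 *m U1^T + U2 *m U2^T = 1%:M -> sqn y = sqn (U1^T *m y) + sqn (U2^T *m y).
Proof.
move=> h; rewrite /sqn !trmx_mul !trmxK.
have -> : y^T *m y = y^T *m (1%:M *m y) by rewrite mul1mx.
by rewrite -h mulmxDl mulmxDr !mulmxA mxE.
Qed.

Lemma diag_mx_ii k (d : 'rV[R]_k) i : diag_mx d i i = d 0 i.
Proof. by rewrite mxE eqxx mulr1n. Qed.

Lemma unit_sqn b (x : 'cV[R]_b) : vnorm x = 1 -> sqn x = 1.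
Proof. by rewrite vnorm_sqn => h; rewrite -(sqr_sqrtr (sqn_ge0 x)) h expr1n. Qed.

Lemma part2 (r a p : nat) (U1 Ut1 : 'M[R]_(a, r)) (U2 : 'M[R]_(a, p)) Q1 Q2 S :
 (1 <= r)%N -> U1 *m U1^T + U2 *m U2^T = 1%:M -> Ut1^T *m Ut1 = 1%:M ->
 orthogonal_mx Q1 -> orthogonal_mx Q2 -> rdiag S -> (forall i, 0 <= S i i) ->
 U1^T *m Ut1 = Q1 *m S *m Q2^T ->
 spnorm (S - 1%:M) <= spnorm (sinTheta U1 Ut1) ^+ 2.
Proof.
move=> hr hU hUt hQ1 hQ2 hS hS0 hM.
set M := U1^T *m Ut1.
have Mx i : M *m (Q2 *m ev i) = S i i *: (Q1 *m ev i).
  rewrite /M hM -!mulmxA (mulmxA Q2^T) hQ2 mul1mx {1}(rdiag_diag hS) diag_ev mxE.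
  by rewrite scalemxAr.
have sqMx i : sqn (M *m (Q2 *m ev i)) = S i i ^+ 2.
  by rewrite Mx sqnZ sqn_iso // sqn_ev mulr1.
have S1 i : S i i <= 1.
  have : sqn (M *m (Q2 *m ev i)) <= 1.
    rewrite /M -mulmxA; have := sqn_split (Ut1 *m (Q2 *m ev i)) hU.
    rewrite sqn_iso // sqn_iso // sqn_ev => e.
    have := sqn_ge0 (U2^T *m (Ut1 *m (Q2 *m ev i))); lra.
  rewrite sqMx; have := hS0 i; nra.
have hk : (r.-1 < r)%N by rewrite ltn_predL.
set k := Ordinal hk.
set z := singvals M.
have zk : 0 <= z 0 k /\ forall i, z 0 k <= S i i.
  case: (pselect (exists z, singvals_of M z)) => [ex|nex]; last first.
    rewrite /z /singvals xgetPN; first by rewrite mxE; split=> // i; exact: hS0.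
    by move=> z' h; apply: nex; exists z'.
  have := xgetPex 0 ex; rewrite -/(singvals M) -/z.
  case=> P [W [hP hW _ hnn hMs]].
  have zle j : 0 <= z 0 k /\ z 0 k <= z 0 j.
    have := hnn j k j k erefl erefl; rewrite !diag_mx_ii; apply.
    by rewrite /= -ltnS prednK.
  split; first by case: (zle k).
  move=> i; have := sqMx i; rewrite {1}hMs -!mulmxA sqn_iso //.
  have := sqn_diag_ge (W^T *m (Q2 *m ev i)) (c := z 0 k ^+ 2).
  rewrite sqn_iso; last by have := orthT hW; rewrite /orthogonal_mx.
  rewrite sqn_iso // sqn_ev mulr1 => h1 h2.
  have {h1} : z 0 k ^+ 2 <= S i i ^+ 2.
    rewrite -h2; apply: h1 => j; have [h3 h4] := zle j; nra.
  move=> h; have h4 := hS0 i; have [h3 _] := zle k.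
  by rewrite -(ler_pXn2r (n:=2)) // nnegrE.
case: zk => zk0 zkS.
set B := spnorm (sinTheta U1 Ut1).
have zk1 : z 0 k <= 1 by have := zkS k; have := S1 k; lra.
have hB : 1 - z 0 k ^+ 2 <= B ^+ 2.
  set d := \row_i Num.sqrt (1 - z 0 i ^+ 2).
  have eT : sinTheta U1 Ut1 = diag_mx d by [].
  have dle : forall x, vnorm x = 1 -> vnorm (diag_mx d *m x) <= 1.
    move=> x hx; rewrite vnorm_sqn -sqrtr1 ler_sqrt // -[1 in X in _ <= X](unit_sqn hx).
    rewrite -[X in _ <= X]mul1r; apply: sqn_diag_le => i; rewrite mxE.
    have h0 := sqrtr_ge0 (1 - z 0 i ^+ 2).
    have : Num.sqrt (1 - z 0 i ^+ 2) <= 1.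
      rewrite -[X in _ <= X]sqrtr1 ler_sqrt //; have := sqr_ge0 (z 0 i); lra.
    nra.
  have := spnorm_lb dle (vnorm_ev k); rewrite -eT -/B diag_ev vnorm_sqn sqnZ sqn_ev mulr1.
  rewrite sqrtr_sqr mxE ger0_norm ?sqrtr_ge0 // => h.
  have h1 : 0 <= 1 - z 0 k ^+ 2 by nra.
  rewrite -(sqr_sqrtr h1).
  have := sqrtr_ge0 (1 - z 0 k ^+ 2); nra.
apply: (spnorm_ub k) => x hx.
rewrite {1}(rdiag_diag hS).
have -> : diag_mx (\row_i S i i) - 1%:M = diag_mx (\row_i (S i i - 1)) :> 'M[R]_r.
  apply/matrixP => i j; rewrite !mxE; case: eqVneq => _; rewrite ?mulr1n ?mulr0n //.
  by rewrite subr0.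
have hB0 : 0 <= B ^+ 2 by apply: sqr_ge0.
rewrite vnorm_sqn -(ger0_norm hB0) -sqrtr_sqr ler_sqrt ?sqr_ge0 //.
rewrite -[X in _ <= X]mulr1 -[1 in X in _ <= X](unit_sqn hx).
apply: sqn_diag_le => i; rewrite mxE.
have h1 := zkS i; have h2 := S1 i; have h3 := hS0 i.
have h4 : 1 - S i i <= B ^+ 2 by nra.
have h5 : 0 <= B ^+ 2 + (1 - S i i) by lra.
nra.
Qed.

End P2.


Lemma ab_id (V : zmodType) (a b c d e : V) : a + b + (c + (d + e)) - a = d + e + c + b.
Proof. rewrite addrC !addrA addNr add0r [RHS]addrC -!addrA; congr (_ + _).
by rewrite addrC -addrA. Qed.

Section P1.
Variable R : realType.

Lemma dl0 r p q (S : 'M[R]_(r + p, r + q)) : rdiag S -> dlsubmx S = 0.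
Proof.
move=> h; apply/matrixP => i j; rewrite !mxE; apply: h => /= e.
by have := ltn_ord j; rewrite -e; rewrite ltnNge leq_addr.
Qed.

Lemma ul_rdiag r p q (S : 'M[R]_(r + p, r + q)) : rdiag S -> rdiag (ulsubmx S).
Proof. by move=> h i j ne; rewrite !mxE; apply: h. Qed.

Lemma part1 (r p q : nat)
  (A dA : 'M[R]_(r + p, r + q))
  (U Ut : 'M[R]_(r + p)) (V Vt : 'M[R]_(r + q))
  (Sg Sgt : 'M[R]_(r + p, r + q))
  (Q1 Q2 S : 'M[R]_r) :
  (1 <= r)%N ->
  svd_of A U Sg V ->
  svd_of (A + dA) Ut Sgt Vt ->
  (forall i : 'I_r, (i : nat) = r.-1 -> 0 < ulsubmx Sgt i i) ->
  (lsubmx U)^T *m lsubmx Ut = Q1 *m S *m Q2^T ->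
  lsubmx Ut - lsubmx U *m (Q1 *m Q2^T) =
    rsubmx U *m (rsubmx U)^T *m dA *m lsubmx V *m (lsubmx V)^T *m lsubmx Vt *m invmx (ulsubmx Sgt)
  + rsubmx U *m (rsubmx U)^T *m dA *m rsubmx V *m (rsubmx V)^T *m lsubmx Vt *m invmx (ulsubmx Sgt)
  + rsubmx U *m drsubmx Sg *m (rsubmx V)^T *m lsubmx Vt *m invmx (ulsubmx Sgt)
  + lsubmx U *m Q1 *m (S - 1%:M) *m Q2^T.
Proof.
move=> hr [hU hV hSg _ hA] [hUt hVt hSgt hnn hAt] hpos hM.
have [hU11 hU21 hU22 hUU] := orth_blocks hU.
have [_ _ _ hVV] := orth_blocks hV.
have [hVt11 hVt21 _ _] := orth_blocks hVt.
set Sig := ulsubmx Sgt.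
have hunit : Sig \in unitmx.
  rewrite /Sig (rdiag_diag (ul_rdiag hSgt)) unitmxE det_diag unitfE.
  apply: lt0r_neq0; apply: prodr_gt0 => i _; rewrite mxE.
  have hk : (r.-1 < r)%N by rewrite ltn_predL.
  have := hpos (Ordinal hk) erefl; rewrite /Sig !mxE => h.
  have := hnn (lshift p i) (lshift p (Ordinal hk)) (lshift q i) (lshift q (Ordinal hk))
    erefl erefl; rewrite /= -ltnS prednK // => /(_ (ltn_ord i)) [_ h2].
  exact: lt_le_trans h h2.
have hb : (A + dA) *m lsubmx Vt = lsubmx Ut *m Sig.
  rewrite hAt -mulmxA.
  have -> : Vt^T *m lsubmx Vt = col_mx 1%:M 0.
    by rewrite -{1}[Vt]hsubmxK tr_row_mx mul_col_mx hVt11 hVt21.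
  rewrite -[Sgt]submxK (dl0 hSgt) -mulmxA mul_block_col !mulmx1 !mulmx0 ?mul0mx !addr0.
  by rewrite -{1}[Ut]hsubmxK mul_row_col mulmx0 addr0.
have hc : lsubmx Ut = (A + dA) *m lsubmx Vt *m invmx Sig by rewrite hb mulmxK.
have he : (rsubmx U)^T *m A = drsubmx Sg *m (rsubmx V)^T.
  rewrite hA !mulmxA.
  have -> : (rsubmx U)^T *m U = row_mx 0 1%:M.
    by rewrite -{2}[U]hsubmxK mul_mx_row hU21 hU22.
  rewrite -{1}[Sg]submxK (dl0 hSg) mul_row_block !mul0mx !mul1mx !add0r.
  by rewrite -[X in X^T]hsubmxK tr_row_mx mul_row_col mul0mx add0r.
have E1 : lsubmx Ut = lsubmx U *m Q1 *m S *m Q2^T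
    + rsubmx U *m (rsubmx U)^T *m (A + dA) *m lsubmx Vt *m invmx Sig.
  rewrite -{1}[lsubmx Ut]mul1mx -hUU mulmxDl -!mulmxA hM {1}hc !mulmxA.
  by rewrite -!mulmxA.
have E2 : rsubmx U *m (rsubmx U)^T *m A *m lsubmx Vt *m invmx Sig
    = rsubmx U *m drsubmx Sg *m (rsubmx V)^T *m lsubmx Vt *m invmx Sig.
  by rewrite -(mulmxA (rsubmx U)) he !mulmxA.
have E3 : rsubmx U *m (rsubmx U)^T *m dA *m lsubmx Vt *m invmx Sig =
    rsubmx U *m (rsubmx U)^T *m dA *m lsubmx V *m (lsubmx V)^T *m lsubmx Vt *m invmx Sig
  + rsubmx U *m (rsubmx U)^T *m dA *m rsubmx V *m (rsubmx V)^T *m lsubmx Vt *m invmx Sig.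
  by rewrite -{1}(mulmx1 dA) -hVV !mulmxDr !mulmxDl !mulmxA.
have E4 : lsubmx U *m Q1 *m S *m Q2^T =
    lsubmx U *m (Q1 *m Q2^T) + lsubmx U *m Q1 *m (S - 1%:M) *m Q2^T.
  by rewrite (mulmxDr (lsubmx U *m Q1)) mulmxN mulmx1 mulmxDl mulNmx !mulmxA addrC subrK.
rewrite E1 (mulmxDr (rsubmx U *m (rsubmx U)^T)) !mulmxDl E2 E3 E4.
exact: ab_id.
Qed.
End P1.

End Aux.

(* n = r + p, m = r + q with p, q >= 1 encodes 1 <= r < min(n, m). *)
Theorem proposition3p11 (R : realType) (r p q : nat)
  (A dA : 'M[R]_(r + p, r + q))
  (U Ut : 'M[R]_(r + p)) (V Vt : 'M[R]_(r + q))
  (Sg Sgt : 'M[R]_(r + p, r + q))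
  (Q1 Q2 S : 'M[R]_r) :
  (1 <= r)%N -> (1 <= p)%N -> (1 <= q)%N ->
  svd_of A U Sg V ->
  svd_of (A + dA) Ut Sgt Vt ->
  (forall i : 'I_r, (i : nat) = r.-1 -> 0 < ulsubmx Sgt i i) ->
  orthogonal_mx Q1 -> orthogonal_mx Q2 ->
  rdiag S -> (forall i : 'I_r, 0 <= S i i) ->
  (lsubmx U)^T *m lsubmx Ut = Q1 *m S *m Q2^T ->
  let U1 := lsubmx U in let U2 := rsubmx U in
  let V1 := lsubmx V in let V2 := rsubmx V in
  let Ut1 := lsubmx Ut in let Vt1 := lsubmx Vt in
  let Sgt1inv := invmx (ulsubmx Sgt) in
  let Sg2 := drsubmx Sg in
  let Q := Q1 *m Q2^T in
  Ut1 - U1 *m Q =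
    U2 *m U2^T *m dA *m V1 *m V1^T *m Vt1 *m Sgt1inv
  + U2 *m U2^T *m dA *m V2 *m V2^T *m Vt1 *m Sgt1inv
  + U2 *m Sg2 *m V2^T *m Vt1 *m Sgt1inv
  + U1 *m Q1 *m (S - 1%:M) *m Q2^T
  /\ spnorm (S - 1%:M) <= spnorm (sinTheta U1 Ut1) ^+ 2.
Proof.
move=> hr hp hq hA hAt hpos hQ1 hQ2 hS hS0 hM U1 U2 V1 V2 Ut1 Vt1 Sgt1inv Sg2 Q.
split; first exact: (Aux.part1 hr hA hAt hpos hM).
case: hA => [hU _ _ _ _]; case: hAt => [hUt _ _ _ _].
have [_ _ _ hUU] := Aux.orth_blocks hU.
have [hUt1 _ _ _] := Aux.orth_blocks hUt.
exact: (Aux.part2 hr hUU hUt1 hQ1 hQ2 hS hS0 hM).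
Qed.
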